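(* Let $n=0$ and suppose $m^2<r$. Then $\bar{\mathcal{A}}_q=\bar{\mathcal{C}}_q$ and $\operatorname{End}_{\bar{\mathcal{C}}_q}\bar V^{\otimes r}=\operatorname{End}_{\bar{\mathcal{A}}_q}\bar V^{\otimes r}$.
   Context: $q$ indeterminate, $K=\mathbb{Q}(q)$, $\bar K$ an algebraic closure, $r\ge2$. $\mathcal{H}_{\bar K,r}(q)$ is the type $A$ Iwahori–Hecke algebra over $\bar K$ (generators $T_1,\dots,T_{r-1}$, $T_i^2=(q-q^{-1})T_i+1$, braid relations); the Goldman involution is the algebra automorphism with $\hat T_i=(q-q^{-1})-T_i$, and $\mathcal{H}^1_{\bar K,r}(q)=\{X:\hat X=X\}$. $\bar V$ is the $\bar K$-space with basis $v_1,\dots,v_m$ (all of even degree, $n=0$). $\pi_r$ is the $q$-permutation representation on $\bar V^{\otimes r}$: $\pi_r(T_i)=\mathrm{Id}^{\otimes i-1}\otimes T\otimes\mathrm{Id}^{\otimes r-i-1}$ with $T(v_k\otimes v_k)=q\,v_k\otimes v_k$, $T(v_k\otimes v_l)=v_l\otimes v_k+(q-q^{-1})v_k\otimes v_l$ for $k<l$, $T(v_k\otimes v_l)=v_l\otimes v_k$ for $k>l$. $\bar{\mathcal{A}}_q=\pi_r(\mathcal{H}_{\bar K,r}(q))$, $\bar{\mathcal{C}}_q=\pi_r(\mathcal{H}^1_{\bar K,r}(q))$. *)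

(* Defs.v *)
From HB Require Import structures.
From mathcomp Require Import all_boot all_order all_algebra all_field.
Set Implicit Arguments. Unset Strict Implicit. Unset Printing Implicit Defensive.
Import GRing.Theory.
Local Open Scope ring_scope.

Definition Kq : fieldType := {fraction {poly rat}}.
Definition qK : Kq := tofrac ('X : {poly rat}).

Definition qpar (L : fieldType) (iota : {rmorphism Kq -> L}) : L := iota qK.

(* Generator T_{i+1} (0-indexed by i : 'I_(r-1)) acts on tensor positions
   i and i+1 (0-indexed in 'I_r). *)
Lemma lpos_subproof r (i : 'I_r.-1) : (i < r)%N.
Proof. exact: leq_trans (ltn_ord i) (leq_pred r). Qed.
Lemma rpos_subproof r (i : 'I_r.-1) : (i.+1 < r)%N.
Proof. by case: r i => [[]|r] i //=; rewrite ltnS. Qed.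
Definition lpos r (i : 'I_r.-1) : 'I_r := Ordinal (lpos_subproof i).
Definition rpos r (i : 'I_r.-1) : 'I_r := Ordinal (rpos_subproof i).

(* Basis of Vbar^{(x) r}: v_{f 0} (x) ... (x) v_{f (r-1)}, f : 'I_r -> 'I_m. *)
Definition Idx (r m : nat) := {ffun 'I_r -> 'I_m}.
(* Vbar^{(x) r} as the L-vector space of coordinate functions on the basis. *)
Definition Wt (L : fieldType) (r m : nat) := {ffun Idx r m -> L^o}.

Definition ebasis (L : fieldType) r m (f : Idx r m) : Wt L r m :=
  [ffun g => (g == f)%:R].

Definition swapf r m (i : 'I_r.-1) (f : Idx r m) : Idx r m :=
  [ffun p => if p == lpos i then f (rpos i)
             else if p == rpos i then f (lpos i) else f p].

Definition Timg (L : fieldType) (q : L) r m (i : 'I_r.-1) (f : Idx r m)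
    : Wt L r m :=
  let k := f (lpos i) in let l := f (rpos i) in
  if k == l then q *: ebasis L f
  else if (k < l)%N then ebasis L (swapf i f) + (q - q^-1) *: ebasis L f
  else ebasis L (swapf i f).

Definition PiT (L : fieldType) (q : L) r m (i : 'I_r.-1) : 'End(Wt L r m) :=
  linfun (fun x : Wt L r m => \sum_(f : Idx r m) x f *: Timg q i f).

Definition commutant (L : fieldType) (vT : vectType L) (U : {vspace 'End(vT)})
    (f : 'End(vT)) : Prop :=
  forall g, g \in U -> (f \o g = g \o f)%VF.

(* Main.v *)
Require Import Defs.
From HB Require Import structures.
From mathcomp Require Import all_boot all_order all_algebra all_field.
From Stdlib Require Import Classical FunctionalExtensionality.
From mathcomp Require Import zify.
Import GRing.Theory.
Local Open Scope ring_scope.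

Inductive nc (S : Type) (n : nat) : Type :=
| ncG of 'I_n | nc1 | ncAdd of nc S n & nc S n | ncMul of nc S n & nc S n
| ncSc of S & nc S n.
Arguments ncG {S n}. Arguments nc1 {S n}. Arguments ncAdd {S n}.
Arguments ncMul {S n}. Arguments ncSc {S n}.

Section Eval.
Variables (S : Type) (F : pzRingType) (V : lmodType F) (mul : V -> V -> V)
  (one : V) (s : S -> F) (n : nat) (g : 'I_n -> V).
Fixpoint ev (e : nc S n) : V :=
  match e with
  | @ncG _ _ i => g i | @nc1 _ _ => one | @ncAdd _ _ a b => ev a + ev b
  | @ncMul _ _ a b => mul (ev a) (ev b) | @ncSc _ _ c a => s c *: ev a end.
End Eval.
Arguments ev {S F V} mul one s {n} g e.

Fixpoint ncrev {S : Type} {n : nat} (e : nc S n) : nc S n :=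
  match e with
  | @ncMul _ _ a b => ncMul (ncrev b) (ncrev a)
  | @ncAdd _ _ a b => ncAdd (ncrev a) (ncrev b)
  | @ncSc _ _ c a => ncSc c (ncrev a)
  | x => x end.

Section DC.
Variables (F : fieldType) (N n : nat).
Hypothesis anis : forall (I : finType) (v : I -> F),
  \sum_i v i * v i = 0 -> forall i, v i = 0.
Definition PV := ('M[F]_N * 'M[F]_N)%type.
Variable G : 'I_n -> PV.
Hypothesis Gsym1 : forall i, (G i).1^T = (G i).1.
Hypothesis Gsym2 : forall i, (G i).2^T = (G i).2.

Definition pmul (Z Z' : PV) : PV := (Z.1 *m Z'.1, Z.2 *m Z'.2).
Definition pone : PV := (1%:M, 1%:M).
Definition evp (e : nc F n) : PV := ev pmul pone id G e.
Definition Bp (Z : PV) := exists e, evp e = Z.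
Definition trp (Z : PV) : PV := (Z.1^T, Z.2^T).

Lemma evp_rev e : evp (ncrev e) = trp (evp e).
Proof.
rewrite /evp; elim: e => [i||a IHa b IHb|a IHa b IHb|c a IHa] /=.
- by rewrite /trp Gsym1 Gsym2; case: (G i).
- by rewrite /trp /pone !tr_scalar_mx.
- by rewrite IHa IHb /trp /= !linearD.
- by rewrite IHa IHb /trp /pmul /= !trmx_mul.
- by rewrite IHa /trp /= !linearZ.
Qed.

Lemma Bp0 : Bp 0.
Proof. by exists (ncSc 0 nc1); rewrite /evp /= scale0r. Qed.
Lemma BpD Z Z' : Bp Z -> Bp Z' -> Bp (Z + Z').
Proof. by case=> e <- [e' <-]; exists (ncAdd e e'). Qed.
Lemma BpZ a Z : Bp Z -> Bp (a *: Z).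
Proof. by case=> e <-; exists (ncSc a e). Qed.
Lemma BpM Z Z' : Bp Z -> Bp Z' -> Bp (pmul Z Z').
Proof. by case=> e <- [e' <-]; exists (ncMul e e'). Qed.
Lemma Bp1 : Bp pone. Proof. by exists nc1. Qed.
Lemma BpG i : Bp (G i). Proof. by exists (ncG i). Qed.
Lemma BpT Z : Bp Z -> Bp (trp Z).
Proof. by case=> e <-; exists (ncrev e); rewrite evp_rev. Qed.

Lemma Bp_span (s : seq PV) : (forall x, x \in s -> Bp x) ->
  forall Z, Z \in <<s>>%VS -> Bp Z.
Proof.
move=> hs Z /(coord_span (X := in_tuple s)) ->.
apply: (big_ind Bp); [exact: Bp0|exact: BpD|].
by move=> i _; apply: BpZ; apply: hs; apply: mem_nth.
Qed.

Lemma exBv : exists s : seq PV, (forall x, x \in s -> Bp x) /\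
  (forall Z, Bp Z -> Z \in <<s>>%VS).
Proof.
suff: forall d (s : seq PV), (\dim (fullv : {vspace PV}) - \dim <<s>> <= d)%N ->
    (forall x, x \in s -> Bp x) -> exists s' : seq PV, (forall x, x \in s' -> Bp x) /\
  (forall Z, Bp Z -> Z \in <<s'>>%VS).
  by move/(_ _ [::] (leqnn _)); apply=> x; rewrite in_nil.
elim=> [|d IH] s hd hs.
  exists s; split=> // Z _.
  have /eqP -> : <<s>>%VS == fullv.
    by rewrite eqEdim subvf /=; move: hd; rewrite leqn0 subn_eq0.
  exact: memvf.
case: (classic (exists Z, Bp Z /\ Z \notin <<s>>%VS)) => [[Z [hZ nZ]]|nex].
  apply: (IH (Z :: s)); last by move=> x; rewrite inE => /orP[/eqP->|/hs].
  have sub : (<<s>> <= <<Z :: s>>)%VS by rewrite span_cons addvSr.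
  have lt : (\dim <<s>> < \dim <<Z :: s>>)%N.
    rewrite (ltn_leqif (dimv_leqif_eq sub)); apply/negP => /eqP E.
    by move: nZ; rewrite E memv_span // mem_head.
  have le : (\dim <<Z :: s>> <= \dim (fullv : {vspace PV}))%N by apply: dimvS; apply: subvf.
  lia.
exists s; split=> // Z hZ; apply/negPn/negP => nZ; apply: nex; by exists Z.
Qed.

Definition dot (Z Z' : PV) : F := \tr (Z.1 *m Z'.1^T) + \tr (Z.2 *m Z'.2^T).

Lemma trC (A B : 'M[F]_N) : \tr (A *m B^T) = \tr (B *m A^T).
Proof. by rewrite -mxtrace_tr trmx_mul trmxK. Qed.

Lemma dotC Z Z' : dot Z Z' = dot Z' Z.
Proof. by rewrite /dot trC [\tr (Z.2 *m _)]trC. Qed.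

Lemma dotDr Z x y : dot Z (x + y) = dot Z x + dot Z y.
Proof.
by rewrite /dot /= !linearD /= addrACA.
Qed.
Lemma dotZr Z a x : dot Z (a *: x) = a * dot Z x.
Proof.
by rewrite /dot /= !linearZ /= mulrDr.
Qed.
Lemma dotDl Z x y : dot (x + y) Z = dot x Z + dot y Z.
Proof. by rewrite dotC dotDr !(dotC Z). Qed.
Lemma dotZl Z a x : dot (a *: x) Z = a * dot x Z.
Proof. by rewrite dotC dotZr dotC. Qed.
Lemma dot0l Z : dot 0 Z = 0.
Proof. by have := dotZl Z 0 0; rewrite scale0r mul0r. Qed.

Lemma tr_sq (A : 'M[F]_N) : \tr (A *m A^T) = \sum_(p : 'I_N * 'I_N) A p.1 p.2 * A p.1 p.2.
Proof.
rewrite /mxtrace -(pair_big predT predT (fun i j => A i j * A i j)) /=.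
by apply: eq_bigr => i _; rewrite mxE; apply: eq_bigr => j _; rewrite mxE.
Qed.

Lemma anisP Z : dot Z Z = 0 -> Z = 0.
Proof.
case: Z => A B; rewrite /dot /= !tr_sq => h.
pose v (s : ('I_N * 'I_N) + ('I_N * 'I_N)) :=
  match s with inl p => A p.1 p.2 | inr p => B p.1 p.2 end.
have hv : \sum_s v s * v s = 0 by rewrite big_sumType.
have hz := @anis _ v hv.
congr pair; apply/matrixP => i j; rewrite mxE.
  exact: (hz (inl (i, j))).
exact: (hz (inr (i, j))).
Qed.

Definition rowmap (b : seq PV) (Z : PV) : 'rV[F]_(size b) :=
  \row_(j < size b) dot b`_j Z.
Lemma rowmap_lin b : linear (rowmap b).
Proof. by move=> a x y; apply/rowP=> j; rewrite !mxE dotDr dotZr. Qed.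
HB.instance Definition _ b :=
  GRing.isLinear.Build F PV 'rV[F]_(size b) *:%R (rowmap b) (rowmap_lin b).

Hypothesis homvan : forall Phi : 'cV[F]_N -> 'cV[F]_N,
  (forall a x y, Phi (a *: x + y) = a *: Phi x + Phi y) ->
  (forall i x, Phi ((G i).1 *m x) = (G i).2 *m Phi x) -> forall x, Phi x = 0.
Hypothesis homvan' : forall Phi : 'cV[F]_N -> 'cV[F]_N,
  (forall a x y, Phi (a *: x + y) = a *: Phi x + Phi y) ->
  (forall i x, Phi ((G i).2 *m x) = (G i).1 *m Phi x) -> forall x, Phi x = 0.

Section Inner.
Variable Bv : {vspace PV}.
Hypothesis BvP : forall Z, Z \in Bv <-> Bp Z.

Let bs : seq PV := vbasis Bv.
Definition Bperp : {vspace PV} := lker (linfun (rowmap bs)).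

Lemma memBperp w : w \in Bperp <-> (forall u, u \in Bv -> dot u w = 0).
Proof.
rewrite memv_ker lfunE /=; split.
  move/eqP/rowP => h u /coord_vbasis ->.
  rewrite (big_morph (fun u => dot u w) (fun x y => dotDl w x y) (dot0l w)).
  apply: big1 => i _; rewrite dotZl.
  have hi : (i < size bs)%N by rewrite size_tuple.
  by have := h (Ordinal hi); rewrite !mxE => ->; rewrite mulr0.
move=> h; apply/eqP/rowP => j; rewrite !mxE; apply: h.
by apply: vbasis_mem; apply: mem_nth.
Qed.

Lemma capBB : (Bv :&: Bperp = 0)%VS.
Proof.
apply/eqP; rewrite -subv0; apply/subvP => x; rewrite memv_cap memv0 => /andP[hx /memBperp h].
by apply/eqP; apply: anisP; apply: h.
Qed.

Lemma sumBB : (Bv + Bperp = fullv)%VS.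
Proof.
apply/eqP; rewrite eqEdim subvf /= dimv_disjoint_sum ?capBB //.
have := limg_ker_dim (linfun (rowmap bs)) fullv; rewrite capfv => E.
have le : (\dim (linfun (rowmap bs) @: fullv) <= \dim Bv)%N.
  apply: leq_trans (dimvS (subvf _)) _.
  rewrite dimvf; have -> : dim (matrix F 1 (size bs)) = (1 * size bs)%N by exact: dim_matrix.
  by rewrite mul1n size_tuple.
rewrite /Bperp -E addnC leq_add2r; exact: le.
Qed.

Let p := daddv_pi Bv Bperp.

Lemma pin Z : p Z \in Bv. Proof. exact: memv_pi. Qed.
Lemma pres Z : Z - p Z \in Bperp.
Proof.
have := daddv_pi_add capBB (_ : Z \in (Bv + Bperp)%VS).
rewrite sumBB memvf => /(_ isT) E.
by rewrite -{1}E addrC addKr memv_pi.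
Qed.
Lemma puniq Z u : u \in Bv -> Z - u \in Bperp -> p Z = u.
Proof.
move=> hu hr; apply/eqP; rewrite -subr_eq0.
have : p Z - u \in (Bv :&: Bperp)%VS.
  rewrite memv_cap memvB ?pin //=.
  have -> : p Z - u = (Z - u) - (Z - p Z) by rewrite opprB [RHS]addrC addrA subrK.
  by rewrite memvB // pres.
by rewrite capBB memv0.
Qed.

Lemma dot_pmul u b w : dot u (pmul b w) = dot (pmul (trp b) u) w.
Proof.
have t (U B W : 'M[F]_N) : \tr (U *m (B *m W)^T) = \tr ((B^T *m U) *m W^T).
  by rewrite trmx_mul mulmxA mxtrace_mulC mulmxA.
by rewrite /dot /pmul /trp /= !t.
Qed.

Lemma pint b Z : Bp b -> p (pmul b Z) = pmul b (p Z).
Proof.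
move=> hb; apply: puniq.
  by apply/BvP; apply: BpM => //; apply/BvP; apply: pin.
have -> : pmul b Z - pmul b (p Z) = pmul b (Z - p Z).
  by rewrite /pmul /= !mulmxBr.
apply/memBperp => u /BvP hu; rewrite dot_pmul.
by move/memBperp: (pres Z); apply; apply/BvP; apply: BpM => //; apply: BpT.
Qed.


Lemma pairD (X Y X' Y' : 'M[F]_N) : ((X + X', Y + Y') : PV) = (X, Y) + (X', Y').
Proof. by []. Qed.
Lemma pairZ (a : F) (X Y : 'M[F]_N) : ((a *: X, a *: Y) : PV) = a *: (X, Y).
Proof. by []. Qed.
Lemma pair00 : ((0, 0) : PV) = 0. Proof. by []. Qed.
Lemma pairD0 (A B : 'M[F]_N) : ((A + B, 0) : PV) = (A, 0) + (B, 0).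
Proof. by rewrite -pairD addr0. Qed.
Lemma pairZ0 a (A : 'M[F]_N) : ((a *: A, 0) : PV) = a *: (A, 0).
Proof. by rewrite -pairZ scaler0. Qed.
Lemma pair0D (A B : 'M[F]_N) : ((0, A + B) : PV) = (0, A) + (0, B).
Proof. by rewrite -pairD addr0. Qed.
Lemma pair0Z a (A : 'M[F]_N) : ((0, a *: A) : PV) = a *: (0, A).
Proof. by rewrite -pairZ scaler0. Qed.

Lemma colent (M : 'M[F]_N) a k : (M *m delta_mx k (0:'I_1)) a 0 = M a k.
Proof. by rewrite -colE mxE. Qed.

Lemma p2_0 X : (p (X, 0)).2 = 0.
Proof.
have K0 : forall x (j : 'I_N), (p (x *m delta_mx (0:'I_1) j, 0)).2 = 0.
  move=> x0 j; apply/matrixP => a k; rewrite [RHS]mxE.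
  pose Phi (x : 'cV[F]_N) :=
    (p (x *m delta_mx (0:'I_1) j, 0)).2 *m delta_mx k (0:'I_1).
  have lin : forall a' x y, Phi (a' *: x + y) = a' *: Phi x + Phi y.
    move=> a' x y; rewrite /Phi mulmxDl -scalemxAl.
    rewrite pairD0 pairZ0.
    by rewrite linearD linearZ /= mulmxDl scalemxAl.
  have int : forall i x, Phi ((G i).1 *m x) = (G i).2 *m Phi x.
    move=> i x; rewrite /Phi -mulmxA.
    have -> : (((G i).1 *m (x *m delta_mx 0 j), 0) : PV) =
      pmul (G i) (x *m delta_mx 0 j, 0) by rewrite /pmul /= mulmx0.
    rewrite pint; try exact: BpG; by rewrite mulmxA.
  have := homvan _ lin int x0; rewrite /Phi => /(congr1 (fun M : 'cV[F]_N => M a 0)).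
  by rewrite colent mxE.
rewrite (matrix_sum_delta X).
apply: (big_ind (fun X => (p (X, 0)).2 = 0)).
- by rewrite pair00 linear0.
- move=> A B hA hB; rewrite pairD0 linearD /=.
  by rewrite hA hB addr0.
move=> i _; apply: (big_ind (fun X => (p (X, 0)).2 = 0)).
- by rewrite pair00 linear0.
- move=> A B hA hB; rewrite pairD0 linearD /=.
  by rewrite hA hB addr0.
move=> j _; rewrite -(mul_delta_mx (0:'I_1)) scalemxAl; exact: K0.
Qed.

Lemma p1_0 Y : (p (0, Y)).1 = 0.
Proof.
have K0 : forall x (j : 'I_N), (p (0, x *m delta_mx (0:'I_1) j)).1 = 0.
  move=> x0 j; apply/matrixP => a k; rewrite [RHS]mxE.
  pose Phi (x : 'cV[F]_N) :=
    (p (0, x *m delta_mx (0:'I_1) j)).1 *m delta_mx k (0:'I_1).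
  have lin : forall a' x y, Phi (a' *: x + y) = a' *: Phi x + Phi y.
    move=> a' x y; rewrite /Phi mulmxDl -scalemxAl.
    rewrite pair0D pair0Z.
    by rewrite linearD linearZ /= mulmxDl scalemxAl.
  have int : forall i x, Phi ((G i).2 *m x) = (G i).1 *m Phi x.
    move=> i x; rewrite /Phi -mulmxA.
    have -> : ((0, (G i).2 *m (x *m delta_mx 0 j)) : PV) =
      pmul (G i) (0, x *m delta_mx 0 j) by rewrite /pmul /= mulmx0.
    rewrite pint; try exact: BpG; by rewrite mulmxA.
  have := homvan' _ lin int x0; rewrite /Phi => /(congr1 (fun M : 'cV[F]_N => M a 0)).
  by rewrite colent mxE.
rewrite (matrix_sum_delta Y).
apply: (big_ind (fun Y => (p (0, Y)).1 = 0)).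
- by rewrite pair00 linear0.
- move=> A B hA hB; rewrite pair0D linearD /=.
  by rewrite hA hB addr0.
move=> i _; apply: (big_ind (fun Y => (p (0, Y)).1 = 0)).
- by rewrite pair00 linear0.
- move=> A B hA hB; rewrite pair0D linearD /=.
  by rewrite hA hB addr0.
move=> j _; rewrite -(mul_delta_mx (0:'I_1)) scalemxAl; exact: K0.
Qed.

Lemma Bp01 : Bp (0, 1%:M).
Proof.
have p1 : p pone = pone by apply: daddv_pi_id; rewrite ?capBB //; apply/BvP; exact: Bp1.
have E : pone = (1%:M, 0) + (0, 1%:M) by rewrite -pairD addr0 add0r.
have E2 : p (0, 1%:M) = (0, 1%:M).
  have h2 := congr1 snd p1; rewrite {1}E linearD /= p2_0 add0r in h2.
  by rewrite [LHS]surjective_pairing p1_0 h2.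
by apply/BvP; rewrite -E2; apply: pin.
Qed.

End Inner.

Lemma DCmain : exists e, evp e = (0, 1%:M).
Proof.
have [s [hs hsB]] := exBv.
have BvP : forall Z, Z \in <<s>>%VS <-> Bp Z.
  by move=> Z; split; [apply: Bp_span|apply: hsB].
have [e he] := @Bp01 _ BvP. by exists e.
Qed.
End DC.

Lemma frac_nd (R : idomainType) (x : {fraction R}) :
  exists n d : R, d != 0 /\ x = tofrac n / tofrac d.
Proof.
exists (\n_(repr x)), (\d_(repr x)); split; first exact: denom_ratioP.
rewrite -{1}[x]reprK /GRing.inv /= /GRing.mul /=.
unlock tofrac.
rewrite -FracField.pi_inv -FracField.pi_mul /FracField.mulf /FracField.invf /=.
have d0 := denom_ratioP (repr x).
by rewrite !numden_Ratio ?oner_neq0 // mulr1 mul1r Ratio_numden.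
Qed.

Lemma poly_anis (I : finType) (p : I -> {poly rat}) :
  \sum_i p i * p i = 0 -> forall i, p i = 0.
Proof.
move=> h i.
have hx : forall x : rat, (p i).[x] = 0.
  move=> x; have : (\sum_i p i * p i).[x] = 0 by rewrite h horner0.
  rewrite horner_sum => h2.
  have H0 : forall j, predT j -> 0 <= (p j).[x] * (p j).[x].
    by move=> j _; rewrite -expr2 Num.Theory.sqr_ge0.
  have HS : \sum_(j | predT j) (p j).[x] * (p j).[x] = 0.
    by rewrite -[RHS]h2; apply: eq_big => // j _; rewrite hornerM.
  by have /eqP := Num.Theory.psumr_eq0P H0 HS (isT : predT i); rewrite mulf_eq0 orbb => /eqP.
apply: (@roots_geq_poly_eq0 _ _ [seq k%:R | k <- iota 0 (size (p i))]).
- by apply/allP => y /mapP[k _ ->]; rewrite /root hx.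
- by rewrite map_inj_uniq ?iota_uniq // => a b /eqP; rewrite Num.Theory.eqr_nat => /eqP.
by rewrite size_map size_iota.
Qed.

Lemma anisKq (I : finType) (v : I -> Kq) :
  \sum_i v i * v i = 0 -> forall i, v i = 0.
Proof.
move=> h.
have /fin_all_exists [n hn] : forall i, exists n, exists d : {poly rat}, d != 0 /\ v i = tofrac n / tofrac d.
  by move=> i; have [n [d hd]] := frac_nd _ (v i : {fraction {poly rat}}); exists n, d.
have /fin_all_exists [d hd] := hn.
pose D := \prod_i d i.
have D0 : D != 0 by apply/prodf_neq0 => i _; case: (hd i).
have D0' : tofrac D != 0 :> Kq by rewrite tofrac_eq0.
pose pp i := n i * \prod_(j | j != i) d j.
have E : forall i, v i * tofrac D = tofrac (pp i).
  move=> i; case: (hd i) => di ->; rewrite /D (bigD1 i) //= /pp !rmorphM /=.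
  have di' : tofrac (d i) != 0 :> Kq by rewrite tofrac_eq0.
  by rewrite mulrA divfK.
have hp : \sum_i pp i * pp i = 0.
  apply/eqP; rewrite -(tofrac_eq0 (R := {poly rat})) rmorph_sum /=; apply/eqP.
  under eq_bigr => i _ do rewrite rmorphM /= -E.
  transitivity (tofrac D * tofrac D * \sum_i v i * v i); last by rewrite h mulr0.
  rewrite mulr_sumr; apply: eq_bigr => i _.
  by rewrite mulrACA mulrC.
move=> i; have := @poly_anis _ pp hp i => /(congr1 (@tofrac _)); rewrite -E rmorph0 => h0.
by apply/eqP; move: h0 => /eqP; rewrite mulf_eq0 (negbTE D0') orbF.
Qed.

Section Swap.
Variables (r m : nat).

Lemma lr_neq (i : 'I_r.-1) : (lpos i != rpos i).
Proof. by rewrite -val_eqE /= neq_ltn ltnSn. Qed.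

Lemma swapfE (i : 'I_r.-1) (f : Idx r m) p :
  swapf i f p = if p == lpos i then f (rpos i) else if p == rpos i then f (lpos i) else f p.
Proof. by rewrite ffunE. Qed.

Lemma swapf_l i (f : Idx r m) : swapf i f (lpos i) = f (rpos i).
Proof. by rewrite swapfE eqxx. Qed.
Lemma swapf_r i (f : Idx r m) : swapf i f (rpos i) = f (lpos i).
Proof. by rewrite swapfE eq_sym (negbTE (lr_neq i)) eqxx. Qed.
Lemma swapf_o i (f : Idx r m) p : p != lpos i -> p != rpos i -> swapf i f p = f p.
Proof. by move=> h1 h2; rewrite swapfE (negbTE h1) (negbTE h2). Qed.

Lemma swapfK i : cancel (@swapf r m i) (@swapf r m i).
Proof.
move=> f; apply/ffunP => p.
case: (eqVneq p (lpos i)) => [->|h1]; first by rewrite swapf_l swapf_r.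
case: (eqVneq p (rpos i)) => [->|h2]; first by rewrite swapf_r swapf_l.
by rewrite !swapf_o.
Qed.

Lemma swapf_eq i (f : Idx r m) : f (lpos i) = f (rpos i) -> swapf i f = f.
Proof.
move=> e; apply/ffunP => p; rewrite swapfE.
case: (eqVneq p (lpos i)) => [->|//]; first by rewrite e.
by case: (eqVneq p (rpos i)) => [->|//].
Qed.

Definition gv (g : Idx r m) (k : nat) : nat :=
  if insub k is Some o then val (g o) else 0%N.

Lemma gvE g (o : 'I_r) : gv g o = g o.
Proof. by rewrite /gv valK. Qed.

Lemma gv_out g p : (r <= p)%N -> gv g p = 0%N.
Proof. by move=> hp; rewrite /gv insubF // ltnNge hp. Qed.

Lemma gv_swapo g (i : 'I_r.-1) (o : 'I_r) :
  gv (swapf i g) o = if (o : nat) == i then gv g i.+1 else if (o : nat) == i.+1 then gv g i else gv g o.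
Proof.
have E1 : gv g i.+1 = g (rpos i) by exact: (gvE g (rpos i)).
have E2 : gv g i = g (lpos i) by exact: (gvE g (lpos i)).
have E3 : ((o : nat) == i) = (o == lpos i) by [].
have E4 : ((o : nat) == i.+1) = (o == rpos i) by [].
rewrite E1 E2 E3 E4 gvE swapfE; case: ifP => // _; case: ifP => // _; by rewrite gvE.
Qed.

Lemma gv_swap g (i : 'I_r.-1) p :
  gv (swapf i g) p = if p == i then gv g i.+1 else if p == i.+1 then gv g i else gv g p.
Proof.
case: (ltnP p r) => hp; first exact: (gv_swapo g i (Ordinal hp)).
have ri := ltn_ord (rpos i).
have hi : (i < r)%N by apply: ltn_trans ri.
rewrite (gv_out _ _ hp) (gv_out _ _ hp).
have -> : (p == i) = false by apply/negbTE; rewrite neq_ltn; apply/orP; right; apply: leq_trans hp.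
have -> : (p == i.+1) = false by apply/negbTE; rewrite neq_ltn; apply/orP; right; apply: leq_trans hp.
by [].
Qed.

Definition pot (f : Idx r m) : nat := \sum_(p : 'I_r) p * f p.

Lemma pot_swap i (f : Idx r m) : (f (lpos i) < f (rpos i))%N ->
  (pot (swapf i f) < pot f)%N.
Proof.
move=> h.
have ne : rpos i != lpos i by rewrite eq_sym lr_neq.
rewrite /pot (bigD1 (lpos i)) //= (bigD1 (rpos i)) //=.
rewrite [X in (_ < X)%N](bigD1 (lpos i)) //= [X in (_ < _ + X)%N](bigD1 (rpos i)) //=.
rewrite swapf_l swapf_r.
rewrite (eq_bigr (fun p : 'I_r => p * f p)%N); last first.
  by move=> p /andP[h1 h2]; rewrite swapf_o.
have E1 : val (rpos i) = (val (lpos i)).+1 by [].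

move: h; set a := val (f (lpos i)); set b := val (f (rpos i)) => h.
rewrite !mulSn; lia.
Qed.

End Swap.
Arguments gv {r m}. Arguments gvE {r m}. Arguments gv_swap {r m}. Arguments pot {r m}. Arguments pot_swap {r m}.

Section Conc.
Variables (F : fieldType) (q : F) (r m : nat).
Hypothesis q0 : q != 0.
Hypothesis qq : q + q^-1 != 0.
Hypothesis hmr : (m ^ 2 < r)%N.

Local Notation N := #|{: Idx r m}|.

Definition Pm (i : 'I_r.-1) : 'M[F]_N :=
  \matrix_(a, b) Timg q i (enum_val b) (enum_val a).
Definition e_ (f : Idx r m) : 'cV[F]_N := delta_mx (enum_rank f) 0.
Definition wc (w : 'cV[F]_N) (f : Idx r m) : F := w (enum_rank f) 0.

Lemma ebE (h f : Idx r m) : ebasis F h f = (f == h)%:R.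
Proof. by rewrite ffunE. Qed.

Lemma enum_val_eq (a : 'I_N) (h : Idx r m) : (enum_val a == h) = (a == enum_rank h).
Proof. by apply/eqP/eqP => [<-|->]; [rewrite enum_valK | rewrite enum_rankK]. Qed.

Lemma TimgE_eq (i : 'I_r.-1) (g : Idx r m) : g (lpos i) = g (rpos i) -> Timg q i g = q *: ebasis F g.
Proof. by move=> e; rewrite /Timg e eqxx. Qed.

Lemma TimgE_gt (i : 'I_r.-1) (g : Idx r m) : (g (rpos i) < g (lpos i))%N ->
  Timg q i g = ebasis F (swapf i g).
Proof.
move=> h; rewrite /Timg ifF; last by apply/negbTE; rewrite neq_ltn h orbT.
by rewrite ifF // ltnNge ltnW.
Qed.

Lemma TimgE_neq (i : 'I_r.-1) (f g : Idx r m) : f != g -> Timg q i g f = (f == swapf i g)%:R.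
Proof.
move=> fg; rewrite /Timg; case: ifP => [/eqP e|_].
  by rewrite swapf_eq // ffunE ebE (negbTE fg) scaler0.
by case: ifP => _; rewrite !ffunE ?ebE ?(negbTE fg) ?scaler0 ?addr0.
Qed.

Lemma Timg_sym (i : 'I_r.-1) (f g : Idx r m) : Timg q i g f = Timg q i f g.
Proof.
case: (eqVneq f g) => [->//|fg].
rewrite !TimgE_neq //; last by rewrite eq_sym.
have -> : (f == swapf i g) = (g == swapf i f).
  by rewrite -[LHS](inj_eq (can_inj (@swapfK r m i))) swapfK eq_sym.
by [].

Qed.

Lemma Pm_sym i : (Pm i)^T = Pm i.
Proof. by apply/matrixP => a b; rewrite !mxE Timg_sym. Qed.

Lemma Pm_e_entry i (g : Idx r m) a : (Pm i *m e_ g) a 0 = Timg q i g (enum_val a).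
Proof. by rewrite /e_ -colE !mxE enum_rankK. Qed.

Lemma Pm_e_eb i (g h : Idx r m) : Timg q i g = ebasis F h -> Pm i *m e_ g = e_ h.
Proof.
move=> E; apply/matrixP => a z; rewrite ord1 Pm_e_entry E ebE /e_ mxE enum_val_eq.
by rewrite eqxx andbT.
Qed.

Lemma Pm_e_q i (g : Idx r m) : Timg q i g = q *: ebasis F g -> Pm i *m e_ g = q *: e_ g.
Proof.
move=> E; apply/matrixP => a z; rewrite ord1 Pm_e_entry E ffunE ebE /e_ !mxE enum_val_eq.
by rewrite eqxx andbT.
Qed.

Lemma Pw_coord i (w : 'cV[F]_N) (f : Idx r m) : wc (Pm i *m w) f = \sum_b Timg q i f (enum_val b) * w b 0.
Proof. by rewrite /wc mxE; apply: eq_bigr => b _; rewrite mxE enum_rankK Timg_sym. Qed.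

Lemma sum_eb h (w : 'cV[F]_N) : \sum_b ebasis F h (enum_val b) * w b 0 = wc w h.
Proof.
rewrite (bigD1 (enum_rank h)) //= big1 ?addr0; first by rewrite enum_rankK ebE eqxx mul1r.
by move=> b hb; rewrite ebE enum_val_eq (negbTE hb) mul0r.
Qed.

Lemma C1 i (w : 'cV[F]_N) (g : Idx r m) : Pm i *m w = - q^-1 *: w -> g (lpos i) = g (rpos i) -> wc w g = 0.
Proof.
move=> hw e; have := Pw_coord i w g; rewrite hw TimgE_eq //.
under eq_bigr => b _ do rewrite ffunE /= -mulrA.
rewrite -mulr_sumr sum_eb /wc mxE => /eqP; rewrite -subr_eq0 -mulrBl -opprD mulf_eq0 oppr_eq0.
by rewrite addrC (negbTE qq) => /eqP.
Qed.

Lemma C2 i (w : 'cV[F]_N) (g : Idx r m) : Pm i *m w = - q^-1 *: w -> (g (rpos i) < g (lpos i))%N ->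
  wc w (swapf i g) = - q^-1 * wc w g.
Proof.
move=> hw e; have := Pw_coord i w g; rewrite hw TimgE_gt // sum_eb /wc mxE.
by move=> ->.
Qed.

Lemma lin_facts (Phi : 'cV[F]_N -> 'cV[F]_N) :
  (forall a x y, Phi (a *: x + y) = a *: Phi x + Phi y) ->
  [/\ Phi 0 = 0, forall a x, Phi (a *: x) = a *: Phi x &
      forall x y, Phi (x + y) = Phi x + Phi y].
Proof.
move=> lin.
have P0 : Phi 0 = 0.
  have h := lin 1 0 0; rewrite !scale1r addr0 in h.
  by apply: (addIr (Phi 0)); rewrite add0r -h.
split=> //; first by move=> a x; rewrite -[a *: x]addr0 lin P0 addr0.
by move=> x y; have := lin 1 x y; rewrite !scale1r.
Qed.

Lemma bubble (j0 : nat) (w : 'cV[F]_N) :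
  (j0 + m < r)%N ->
  (forall i : 'I_r.-1, (j0 <= i)%N -> (i < j0 + m)%N -> Pm i *m w = - q^-1 *: w) ->
  forall d g a, (j0 <= a)%N -> (a + d < j0 + m)%N -> gv g a = gv g (a + d).+1 ->
  wc w g = 0.
Proof.
move=> hj hw; elim=> [|d IH] g a ha hb he.
  have hi : (a < r.-1)%N by rewrite -subn1; lia.
  pose i := Ordinal hi.
  apply: (@C1 i w g); first by apply: hw => /=; lia.
  apply: ord_inj.
  have E1 : gv g a = g (lpos i) by exact: (gvE g (lpos i)).
  have E2 : gv g a.+1 = g (rpos i) by exact: (gvE g (rpos i)).
  by rewrite -E1 -E2 he addn0.
have hi : (a + d.+1 < r.-1)%N by rewrite -subn1; lia.
pose i := Ordinal hi.
have hwi : Pm i *m w = - q^-1 *: w by apply: hw => /=; lia.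
have E1 : gv g (a + d.+1) = g (lpos i) by exact: (gvE g (lpos i)).
have E2 : gv g (a + d.+1).+1 = g (rpos i) by exact: (gvE g (rpos i)).
have h0 : wc w (swapf i g) = 0.
  apply: (IH _ a) => //; first lia.
  rewrite !gv_swap /=.
  have -> : (a == a + d.+1) = false by apply/eqP; lia.
  have -> : (a == (a + d.+1).+1) = false by apply/eqP; lia.
  have -> : ((a + d).+1 == a + d.+1) = true by apply/eqP; lia.
  by [].
have qi0 : - q^-1 != 0 by rewrite oppr_eq0 invr_eq0.
case: (ltngtP (g (rpos i)) (g (lpos i))) => hc.
- move: h0; rewrite (@C2 i w g hwi hc) => /eqP; rewrite mulf_eq0 (negbTE qi0) /=.
  by move/eqP.
- have hc' : (swapf i g (rpos i) < swapf i g (lpos i))%N by rewrite swapf_l swapf_r.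
  by have := @C2 i w (swapf i g) hwi hc'; rewrite swapfK h0 mulr0.
- by apply: (@C1 i w g) => //; apply: ord_inj.
Qed.

Lemma antisym j0 (w : 'cV[F]_N) : (j0 + m < r)%N ->
  (forall i : 'I_r.-1, (j0 <= i)%N -> (i < j0 + m)%N -> Pm i *m w = - q^-1 *: w) ->
  w = 0.
Proof.
move=> hj hw; apply/matrixP => a z; rewrite ord1 [RHS]mxE.
set g := enum_val a.
have -> : a = enum_rank g by rewrite /g enum_valK.
have hpos : forall t : 'I_m.+1, (j0 + t < r)%N by move=> t; have := ltn_ord t; lia.
pose pos (t : 'I_m.+1) : 'I_r := Ordinal (hpos t).
pose hf (t : 'I_m.+1) := g (pos t).
have ninj : ~ injective hf by move/leq_card; rewrite !card_ord ltnn.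
have [t1 [t2 [ne eq]]] : exists t1 t2, t1 != t2 /\ hf t1 = hf t2.
  apply: NNPP => H; apply: ninj => x y hxy; apply/eqP; apply: contraT => nxy.
  by exfalso; apply: H; exists x, y.
wlog lt : t1 t2 ne eq / (t1 < t2)%N.
  move=> W; case: (ltngtP t1 t2) => h; first exact: (W t1 t2).
    by apply: (W t2 t1) => //; rewrite eq_sym.
  by exfalso; move: ne; rewrite (ord_inj h) eqxx.
have t2m := ltn_ord t2.
apply: (@bubble j0 w hj hw (t2 - t1 - 1) g (j0 + t1)); [lia|lia|].
have -> : (j0 + t1 + (t2 - t1 - 1)).+1 = val (pos t2) by rewrite /=; lia.
have -> : (j0 + t1)%N = val (pos t1) by [].
by rewrite !gvE; congr val.
Qed.

Lemma block (f : Idx r m) : (forall i : 'I_r.-1, (f (rpos i) <= f (lpos i))%N) ->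
  exists j0, (j0 + m < r)%N /\
    forall k, (j0 <= k)%N -> (k < j0 + m)%N -> gv f k = gv f k.+1.
Proof.
move=> hf.
have hr0 : (0 < r)%N by apply: leq_ltn_trans hmr.
set u := gv f.
have step1 : forall k, (k.+1 < r)%N -> (u k.+1 <= u k)%N.
  move=> k hk; have hk' : (k < r.-1)%N by rewrite -subn1; lia.
  have := hf (Ordinal hk').
  have E1 : u k = f (lpos (Ordinal hk')) by exact: (gvE f (lpos (Ordinal hk'))).
  have E2 : u k.+1 = f (rpos (Ordinal hk')) by exact: (gvE f (rpos (Ordinal hk'))).
  by rewrite -E1 -E2.
have mono : forall a b, (a <= b)%N -> (b < r)%N -> (u b <= u a)%N.
  move=> a b; elim: b => [|b IH] hab hb.
    by rewrite leqn0 in hab; rewrite (eqP hab).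
  case: (ltngtP a b.+1) => [h|h|->] //.
    by apply: leq_trans (step1 _ hb) (IH _ _); lia.
  lia.
have u0 : (u 0 < m)%N.
  have E : u 0 = f (Ordinal hr0) by exact: (gvE f (Ordinal hr0)).
  by rewrite E; exact: ltn_ord.
apply: NNPP => H.
have st : forall j0, (j0 + m < r)%N -> (u (j0 + m) < u j0)%N.
  move=> j0 hj.
  have : ~ (forall k, (j0 <= k)%N -> (k < j0 + m)%N -> u k = u k.+1).
    by move=> hk; apply: H; exists j0.
  move/not_all_ex_not => [k hk].
  have h1 : (j0 <= k)%N.
    by apply/negPn/negP => c; apply: hk => c'; rewrite c' in c.
  have h2 : (k < j0 + m)%N.
    by apply/negPn/negP => c; apply: hk => _ c'; rewrite c' in c.
  have h3 : u k <> u k.+1 by move=> e; apply: hk.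
  have h4 : (u k.+1 < u k)%N.
    rewrite ltn_neqAle step1; last lia.
    by rewrite andbT; apply/eqP => e; apply: h3.
  have h5 := mono k.+1 (j0 + m)%N h2 hj.
  have h6 := mono j0 k h1 (ltn_trans h2 hj).
  lia.
have it : forall t, (t <= m)%N -> (u (t * m) + t <= u 0)%N.
  elim=> [|t IH] ht; first by rewrite mul0n addn0.
  have h1 := IH (ltnW ht).
  have h2 : (t * m + m < r)%N.
    have : (t.+1 * m <= m * m)%N by rewrite leq_mul2r ht orbT.
    rewrite mulnn mulSn; lia.
  have := st _ h2; rewrite mulSn addnC; lia.
have := it m (leqnn m); lia.
Qed.

Lemma homvanC (Phi : 'cV[F]_N -> 'cV[F]_N) :
  (forall a x y, Phi (a *: x + y) = a *: Phi x + Phi y) ->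
  (forall i x, Phi (Pm i *m x) = ((q - q^-1)%:M - Pm i) *m Phi x) ->
  forall x, Phi x = 0.
Proof.
move=> lin int; have [P0 PZ PD] := lin_facts _ lin.
have He : forall f, Phi (e_ f) = 0.
  suff : forall k f, (pot f < k)%N -> Phi (e_ f) = 0.
    by move=> H f; exact: (H _ f (ltnSn _)).
  elim=> [//|k IH] f hk.
  case: (boolP [exists i : 'I_r.-1, (f (lpos i) < f (rpos i))%N]).
    move/existsP => [i hi].
    set g := swapf i f.
    have hg : Pm i *m e_ g = e_ f.
      apply: Pm_e_eb; rewrite TimgE_gt /g ?swapfK // swapf_l swapf_r //.
    rewrite -hg int IH ?mulmx0 //.
    rewrite /g; have := pot_swap i f hi; lia.
  rewrite negb_exists => /forallP hn.
  have hf : forall i : 'I_r.-1, (f (rpos i) <= f (lpos i))%N.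
    by move=> i; rewrite leqNgt hn.
  have [j0 [hj hb]] := block _ hf.
  apply: (@antisym j0 _ hj) => i h1 h2.
  have e : f (lpos i) = f (rpos i).
    apply: ord_inj.
    have E1 : gv f i = f (lpos i) by exact: (gvE f (lpos i)).
    have E2 : gv f i.+1 = f (rpos i) by exact: (gvE f (rpos i)).
    by rewrite -E1 -E2; apply: hb.
  have := int i (e_ f); rewrite Pm_e_q ?TimgE_eq // PZ mulmxBl mul_scalar_mx => E.
  have E2 : Pm i *m Phi (e_ f) = (q - q^-1) *: Phi (e_ f) - q *: Phi (e_ f).
    by rewrite E opprB addrC subrK.
  by rewrite E2 -scalerBl addrAC subrr add0r.
move=> x; rewrite (matrix_sum_delta x) (big_morph Phi PD P0).
apply: big1 => a _; rewrite (big_morph Phi PD P0) big1 // => j _.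
rewrite PZ ord1.
have -> : delta_mx a 0 = e_ (enum_val a) by rewrite /e_ enum_valK.
by rewrite He scaler0.
Qed.

Lemma homvanC' (Phi : 'cV[F]_N -> 'cV[F]_N) :
  (forall a x y, Phi (a *: x + y) = a *: Phi x + Phi y) ->
  (forall i x, Phi (((q - q^-1)%:M - Pm i) *m x) = Pm i *m Phi x) ->
  forall x, Phi x = 0.
Proof.
move=> lin int; have [P0 PZ PD] := lin_facts _ lin.
apply: homvanC => // i x.
have -> : Pm i *m x = (q - q^-1) *: x - ((q - q^-1)%:M - Pm i) *m x.
  by rewrite [X in _ - X]mulmxBl mul_scalar_mx opprB addrC subrK.
rewrite PD -scaleN1r !PZ int scaleN1r mulmxBl mul_scalar_mx.
by [].
Qed.

End Conc.

Lemma Timg_map (F1 F2 : fieldType) (phi : {rmorphism F1 -> F2}) (q : F1) r m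
   (i : 'I_r.-1) (g f : Idx r m) :
  phi (Timg q i g f) = Timg (phi q) i g f.
Proof.
rewrite /Timg; case: ifP => _; last case: ifP => _;
 by rewrite !ffunE /= ?rmorphD ?rmorphM ?rmorphB ?fmorphV ?rmorph_nat.
Qed.

Lemma Pm_map (F1 F2 : fieldType) (phi : {rmorphism F1 -> F2}) (q : F1) r m i :
  map_mx phi (Pm F1 q r m i) = Pm F2 (phi q) r m i.
Proof. by apply/matrixP => a b; rewrite !mxE Timg_map. Qed.

Section MapEv.
Variables (F1 F2 : fieldType) (phi : {rmorphism F1 -> F2}) (S : Type) (s : S -> F1)
  (N n : nat) (g : 'I_n -> 'M[F1]_N).
Lemma map_ev e :
  map_mx phi (ev mulmx 1%:M s g e) = ev mulmx 1%:M (phi \o s) (fun i => map_mx phi (g i)) e.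
Proof.
elim: e => [i||a IHa b IHb|a IHa b IHb|c a IHa] /=.
- by [].
- by rewrite map_mx1.
- by rewrite map_mxD IHa IHb.
- by rewrite map_mxM IHa IHb.
- by rewrite map_mxZ IHa.
Qed.
End MapEv.

Lemma evp_fst (F : fieldType) N n (G : 'I_n -> PV F N) e :
  (evp F N n G e).1 = ev mulmx 1%:M id (fun i => (G i).1) e.
Proof. by rewrite /evp; elim: e => //= [a -> b ->|a -> b ->|c a ->]. Qed.
Lemma evp_snd (F : fieldType) N n (G : 'I_n -> PV F N) e :
  (evp F N n G e).2 = ev mulmx 1%:M id (fun i => (G i).2) e.
Proof. by rewrite /evp; elim: e => //= [a -> b ->|a -> b ->|c a ->]. Qed.

Section ToEnd.
Variables (L : fieldType) (r m : nat).
Local Notation N := #|{: Idx r m}|.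

Definition tofun (M : 'M[L]_N) (x : Wt L r m) : Wt L r m :=
  [ffun g => \sum_b M (enum_rank g) b * x (enum_val b)].
Lemma tofun_lin M : linear (tofun M).
Proof.
move=> a x y; apply/ffunP => g; rewrite !ffunE scaler_sumr -big_split.
apply: eq_bigr => b _; rewrite !ffunE /= mulrDr; congr (_ + _).
exact: mulrCA.
Qed.
HB.instance Definition _ M :=
  GRing.isLinear.Build L (Wt L r m) (Wt L r m) *:%R (tofun M) (tofun_lin M).
Definition toEnd M : 'End(Wt L r m) := linfun (tofun M).
Lemma toEndE M x g : toEnd M x g = \sum_b M (enum_rank g) b * x (enum_val b).
Proof. by rewrite lfunE ffunE. Qed.

Lemma toEndM M1 M2 : toEnd (M1 *m M2) = (toEnd M1 \o toEnd M2)%VF.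
Proof.
apply/lfunP => x; rewrite comp_lfunE; apply/ffunP => g; rewrite !toEndE.
under eq_bigr => b _ do rewrite mxE mulr_suml.
rewrite exchange_big /=; apply: eq_bigr => k _; rewrite toEndE enum_valK mulr_sumr.
by apply: eq_bigr => b _; rewrite mulrA.
Qed.

Lemma toEnd1 : toEnd 1%:M = \1%VF.
Proof.
apply/lfunP => x; rewrite id_lfunE; apply/ffunP => g; rewrite toEndE.
rewrite (bigD1 (enum_rank g)) //= big1 ?addr0.
  by rewrite mxE eqxx mulr1n mul1r enum_rankK.
by move=> b hb; rewrite mxE eq_sym (negbTE hb) mulr0n mul0r.
Qed.

Lemma toEndD M1 M2 : toEnd (M1 + M2) = toEnd M1 + toEnd M2.
Proof.
apply/lfunP => x; rewrite add_lfunE; apply/ffunP => g; rewrite ffunE !toEndE -big_split.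
by apply: eq_bigr => b _; rewrite mxE mulrDl.
Qed.

Lemma toEndZ a M : toEnd (a *: M) = a *: toEnd M.
Proof.
apply/lfunP => x; rewrite scale_lfunE; apply/ffunP => g; rewrite ffunE !toEndE scaler_sumr.
by apply: eq_bigr => b _; rewrite mxE; exact: (esym (mulrA _ _ _)).
Qed.

Lemma toEnd0 : toEnd 0 = 0.
Proof. by have := toEndZ 0 0; rewrite !scale0r. Qed.

Lemma toEndPm q i : toEnd (Pm L q r m i) = PiT q m i.
Proof.
rewrite /toEnd /PiT; congr linfun.
apply: FunctionalExtensionality.functional_extensionality => x.
apply/ffunP => g; rewrite ffunE sum_ffunE.
rewrite [RHS](reindex (@enum_val (Idx r m) (mem predT))) /=; last first.
  by exists enum_rank => b _; rewrite ?enum_valK ?enum_rankK.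
apply: eq_bigr => b _; rewrite mxE enum_rankK ffunE mulrC.
by [].
Qed.

Section PiEv.
Variables (H : falgType L) (T : 'I_r.-1 -> H) (phi : H -> 'End(Wt L r m)).
Hypotheses (phiD : forall x y, phi (x + y) = phi x + phi y)
  (phiZ : forall a x, phi (a *: x) = a *: phi x)
  (phi1 : phi 1 = \1%VF) (phiM : forall x y, phi (x * y) = (phi x \o phi y)%VF).
Variables (gens : 'I_r.-1 -> 'M[L]_N) (hg : forall i, phi (T i) = toEnd (gens i))
  (s : Kq -> L).
Lemma phi_ev e : phi (ev *%R 1 s T e) = toEnd (ev mulmx 1%:M s gens e).
Proof.
elim: e => [i||a IHa b IHb|a IHa b IHb|c a IHa] /=.
- exact: hg.
- by rewrite phi1 toEnd1.
- by rewrite phiD toEndD IHa IHb.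
- by rewrite phiM toEndM IHa IHb.
- by rewrite phiZ toEndZ IHa.
Qed.
End PiEv.
End ToEnd.

Theorem corollary6p2
  (* Lbar: an algebraic closure of K = Q(q), embedded via iota *)
  (L : closedFieldType) (iota : {rmorphism Kq -> L})
  (Lalg : forall x : L, exists2 p : {poly Kq}, p != 0 & root (map_poly iota p) x)
  (m r : nat) (hr : (2 <= r)%N) (hmr : (m ^ 2 < r)%N)
  (* the Hecke algebra H_{Lbar,r}(q), with generators T_1, ..., T_{r-1} *)
  (H : falgType L) (T : 'I_r.-1 -> H)
  (Tquad : forall i, T i * T i = (qpar iota - (qpar iota)^-1) *: T i + 1)
  (Tbraid : forall i j : 'I_r.-1, val j = (val i).+1 ->
              T i * T j * T i = T j * T i * T j)
  (Tcomm : forall i j : 'I_r.-1, ((val i).+1 < val j)%N -> T i * T j = T j * T i)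
  (Tgen : agenv <<[seq T i | i : 'I_r.-1]>>%VS = fullv)
  (Hdim : \dim {:H} = r`!)
  (* the Goldman involution *)
  (sigma : 'AEnd(H))
  (sigmaT : forall i, sigma (T i) = (qpar iota - (qpar iota)^-1)%:A - T i)
  (* the q-permutation representation pi_r on Vbar^{(x) r} *)
  (pi : {linear H -> 'End(Wt L r m)})
  (pi1 : pi 1 = \1%VF)
  (piM : forall x y, pi (x * y) = (pi x \o pi y)%VF)
  (piT : forall i, pi (T i) = PiT (qpar iota) m i) :
  let Aq := limg (linfun pi) in
  let Cq := (linfun pi @: fixedSpace sigma)%VS in
  Aq = Cq /\ (forall f : 'End(Wt L r m), commutant Cq f <-> commutant Aq f).
Proof.
move=> Aq Cq.
have hq : qpar iota = iota qK by [].
set q := qpar iota in Tquad sigmaT piT hq.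
set c := q - q^-1 in Tquad sigmaT.
have q0K : qK != 0 :> Kq by rewrite /qK tofrac_eq0 polyX_eq0.
have qqK : qK + qK^-1 != 0 :> Kq.
  apply/negP => /eqP h.
  have h2 : qK * qK + 1 * 1 = 0 :> Kq.
    by have := congr1 (fun z => qK * z) h; rewrite /= mulrDr mulfV // mulr0 mul1r.
  have := @anisKq bool (fun b => if b then qK else 1); rewrite big_bool /=.
  by move/(_ h2 false) => /eqP; rewrite oner_eq0.
pose GK (i : 'I_r.-1) : PV Kq #|{: Idx r m}| :=
  (Pm Kq qK r m i, (qK - qK^-1)%:M - Pm Kq qK r m i).
have [e he] := @DCmain Kq #|{: Idx r m}| r.-1 anisKq GK
  (fun i => Pm_sym _ _ _ _ i)
  (fun i => ltac:(by rewrite /= linearB /= tr_scalar_mx Pm_sym))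
  (fun Phi lin int => @homvanC _ _ _ _ q0K qqK hmr Phi lin int)
  (fun Phi lin int => @homvanC' _ _ _ _ q0K qqK hmr Phi lin int).
have e1 : ev mulmx 1%:M id (fun i => Pm Kq qK r m i) e = 0.
  by rewrite -[RHS](f_equal fst he) evp_fst.
have e2 : ev mulmx 1%:M id (fun i => (qK - qK^-1)%:M - Pm Kq qK r m i) e = 1%:M.
  by rewrite -[RHS](f_equal snd he) evp_snd.
pose gL (i : 'I_r.-1) := Pm L q r m i.
pose gL' (i : 'I_r.-1) := c%:M - Pm L q r m i.
have eL1 : ev mulmx 1%:M (iota \o id) gL e = 0.
  have := @map_ev Kq L iota Kq id _ _ (fun i => Pm Kq qK r m i) e; rewrite e1 map_mx0.
  have -> : (fun i => map_mx iota (Pm Kq qK r m i)) = gL.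
    by apply: functional_extensionality => i; rewrite Pm_map -hq.
  by move=> ->.
have eL2 : ev mulmx 1%:M (iota \o id) gL' e = 1%:M.
  have := @map_ev Kq L iota Kq id _ _ (fun i => (qK - qK^-1)%:M - Pm Kq qK r m i) e; rewrite e2 map_mx1.
  have -> : (fun i => map_mx iota ((qK - qK^-1)%:M - Pm Kq qK r m i)) = gL'.
    apply: functional_extensionality => i.
    by rewrite map_mxB map_scalar_mx Pm_map rmorphB fmorphV -hq.
  by move=> <-.
pose h := ev *%R 1 (iota \o id) T e.
have piD : forall x y, pi (x + y) = pi x + pi y by move=> x y; rewrite linearD.
have piZ : forall a x, pi (a *: x) = a *: pi x by move=> a x; rewrite linearZ.
have ph : pi h = 0.
  rewrite /h (@phi_ev L r m H T pi piD piZ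
    pi1 piM gL) ?eL1 ?toEnd0 //.
  by move=> i; rewrite piT /gL toEndPm.
have psh : pi (sigma h) = \1%VF.
  rewrite /h (@phi_ev L r m H T (fun x => pi (sigma x)) _ _ _ _ gL') ?eL2 ?toEnd1 //.
  - by move=> x y; rewrite !linearD.
  - by move=> a x; rewrite !linearZ.
  - by rewrite rmorph1 pi1.
  - by move=> x y; rewrite rmorphM piM.
  move=> i; rewrite sigmaT linearB linearZ /= pi1 piT /gL' toEndD.
  have -> : - Pm L q r m i = (-1) *: Pm L q r m i by rewrite scaleN1r.
  by rewrite toEndZ scaleN1r toEndPm -scalemx1 toEndZ toEnd1.
have ss : forall x, sigma (sigma x) = x.
  pose V := fixedSpace (sigma \o sigma)%AF.
  have sT : forall i, sigma (sigma (T i)) = T i.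
    move=> i; rewrite sigmaT linearB linearZ /= rmorph1 sigmaT.
    by rewrite opprB addrC subrK.
  have sub : (agenv <<[seq T i | i : 'I_r.-1]>> <= V)%VS.
    apply: agenv_sub_modl.
      by rewrite -memvE; apply/fixedSpaceP; rewrite comp_lfunE !rmorph1.
    apply: subv_trans (asubv [aspace of V]).
    apply: prodvSl; apply/span_subvP => x /mapP [i _ ->].
    by apply/fixedSpaceP; rewrite comp_lfunE sT.
  move=> x; have : x \in V by apply: (subvP sub); rewrite Tgen memvf.
  by move/fixedSpaceP; rewrite comp_lfunE.
have E : Aq = Cq.
  apply/eqP; rewrite eqEsubv; apply/andP; split; last exact: limgS (subvf _).
  apply/subvP => _ /memv_imgP [x _ ->].
  apply/memv_imgP; exists ((1 - h) * x + sigma ((1 - h) * x)).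
    have sD : forall a b, sigma (a + b) = sigma a + sigma b by move=> a b; rewrite linearD.
    by apply/fixedSpaceP; rewrite sD ss addrC.
  have sM : forall a b, sigma (a * b) = sigma a * sigma b by move=> a b; rewrite rmorphM.
  have s1 : sigma 1 = 1 by rewrite rmorph1.
  have sB : forall a b, sigma (a - b) = sigma a - sigma b by move=> a b; rewrite linearB.
  have piB : forall a b, pi (a - b) = pi a - pi b by move=> a b; rewrite linearB.
  rewrite !lfunE /= piD sM !piM sB s1 !piB pi1 ph psh.
  by rewrite subr0 subrr comp_lfun1l comp_lfun0l addr0.
by split=> // f; rewrite E.
Qed.
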